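(* For every $\mu\in P(\mathbb{R})$ we have $\operatorname{card}\big((\{\mu\}^1)^1\big)=1$ if and only if $\mu$ is a Dirac measure.
   Context: $P(\mathbb{R})$ is the set of Borel probability measures on $\mathbb{R}$, with the Kuiper distance $d_{Ku}(\mu,\nu)=\sup\{|\mu(I)-\nu(I)| : I\text{ a non-degenerate interval of }\mathbb{R}\}$. For $\mathcal{M}\subseteq P(\mathbb{R})$, $\mathcal{M}^1=\{\nu\in P(\mathbb{R}) : d_{Ku}(\mu,\nu)=1\text{ for all }\mu\in\mathcal{M}\}$. A Dirac measure is $\delta_x$, the probability measure concentrated at a point $x\in\mathbb{R}$. *)

(* Defs.v *)
From HB Require Import structures.
From mathcomp Require Import all_boot all_order all_algebra.
From mathcomp Require Import all_classical all_reals all_analysis.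
Set Implicit Arguments. Unset Strict Implicit. Unset Printing Implicit Defensive.
Import Order.TTheory GRing.Theory Num.Theory.
Local Open Scope classical_set_scope.
Local Open Scope ring_scope.

(* P(R): Borel probability measures on R are [probability R R], where R is
   equipped with its canonical (Borel) measurable structure. *)

Definition nondeg_itv (R : realType) (i : interval R) : Prop :=
  exists x y : R, x < y /\ x \in i /\ y \in i.

Definition kuiper (R : realType) (mu nu : probability R R) : \bar R :=
  ereal_sup [set `|(mu [set` i] - nu [set` i])%E|%E
            | i in [set i : interval R | nondeg_itv i]].

Definition kuiper_one (R : realType) (M : set (probability R R))
  : set (probability R R) :=
  [set nu | forall mu, M mu -> kuiper mu nu = 1%E].

Definition is_dirac (R : realType) (mu : probability R R) : Prop :=
  exists x : R, forall A : set R, measurable A -> mu A = \d_x A.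

(* In MathComp-Analysis a measure is a total function on [set R]; its values
   on non-Borel sets are irrelevant. *)
Definition same_measure (R : realType) (mu nu : probability R R) : Prop :=
  forall A : set R, measurable A -> mu A = nu A.

Definition card_one (R : realType) (S : set (probability R R)) : Prop :=
  exists2 nu0, S nu0 & forall nu, S nu -> same_measure nu nu0.

(* Main.v *)
Require Import Defs.
From HB Require Import structures.
From mathcomp Require Import all_boot all_order all_algebra.
From mathcomp Require Import all_classical all_reals all_analysis.
From mathcomp Require Import ring lra.
Set Implicit Arguments. Unset Strict Implicit. Unset Printing Implicit Defensive.
Import Order.TTheory GRing.Theory Num.Theory.
Local Open Scope classical_set_scope.
Local Open Scope ring_scope.

Definition pr (R : realType) (P : probability R R) (A : set R) : R := fine (P A).

Lemma prE (R : realType) (P : probability R R) A : measurable A -> P A = (pr P A)%:E.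
Proof.
move=> mA; rewrite /pr fineK //; rewrite ge0_fin_numE //.
by rewrite (le_lt_trans (probability_le1 _ mA)) // ltey.
Qed.

Lemma pr_ge0 (R : realType) (P : probability R R) A : 0 <= pr P A.
Proof. by rewrite /pr fine_ge0. Qed.

Lemma pr_le1 (R : realType) (P : probability R R) A : measurable A -> pr P A <= 1.
Proof. by move=> mA; rewrite -lee_fin -prE // probability_le1. Qed.

Lemma pr_le (R : realType) (P : probability R R) A B : measurable A -> measurable B ->
  A `<=` B -> pr P A <= pr P B.
Proof. by move=> mA mB AB; rewrite -lee_fin -!prE // le_measure // inE. Qed.

Lemma pr_setC (R : realType) (P : probability R R) A : measurable A ->
  pr P (~` A) = 1 - pr P A.
Proof.
move=> mA; apply: EFin_inj; rewrite -prE; last exact: measurableC.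
by rewrite probability_setC // prE // EFinB.
Qed.

Lemma pr_setT (R : realType) (P : probability R R) : pr P setT = 1.
Proof. by rewrite /pr probability_setT. Qed.

Lemma pr_U2 (R : realType) (P : probability R R) A B : measurable A -> measurable B ->
  pr P (A `|` B) <= pr P A + pr P B.
Proof.
move=> mA mB; rewrite -lee_fin EFinD -!prE //; last exact: measurableU.
exact: measureU2.
Qed.

Lemma pr_disjU (R : realType) (P : probability R R) A B : measurable A -> measurable B ->
  A `&` B = set0 -> pr P (A `|` B) = pr P A + pr P B.
Proof.
move=> mA mB AB; apply: EFin_inj; rewrite EFinD -!prE //; last exact: measurableU.
by rewrite measureU.
Qed.

Lemma pr_bigcup0 (R : realType) (P : probability R R) (F : (set R)^nat) :
  (forall k, measurable (F k)) -> (forall k, pr P (F k) = 0) ->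
  pr P (\bigcup_k F k) = 0.
Proof.
move=> mF F0.
have mU : measurable (\bigcup_k F k) by exact: bigcupT_measurable.
have : P.-negligible (\bigcup_k F k).
  apply: negligible_bigcup => k; apply/negligibleP => //.
  by have h := prE P (mF k); rewrite F0 in h; exact: h.
by move/negligibleP => /(_ mU); rewrite /pr => ->.
Qed.

Definition cond (R : realType) (P : probability R R) (A : set R) (mA : measurable A)
  : probability R R := mnormalize (mrestr P mA) P.

Lemma condE (R : realType) (P : probability R R) (A : set R) (mA : measurable A) U :
  0 < pr P A -> measurable U -> pr (cond P mA) U = pr P (U `&` A) / pr P A.
Proof.
move=> hA mU.
have cE : cond P mA U = mnormalize (mrestr P mA) P U by [].
have mrE : forall X, (mrestr P mA : {measure set R -> \bar R}) X = P (X `&` A) by [].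
rewrite /pr cE /mnormalize !mrE setTI (prE P mA) eqe (gt_eqF hA) /=.
rewrite mrE (prE P (measurableI _ _ mU mA)) -EFinM.
by [].
Qed.

Lemma kelt (R : realType) (P Q : probability R R) (i : interval R) :
  `|(P [set` i] - Q [set` i])|%E = (`|pr P [set` i] - pr Q [set` i]|)%:E.
Proof. by rewrite (prE P (measurable_itv i)) (prE Q (measurable_itv i)) -EFinB. Qed.

Lemma kuiper_le (R : realType) (P Q : probability R R) (c : R) :
  (forall i, nondeg_itv i -> `|pr P [set` i] - pr Q [set` i]| <= c) ->
  (kuiper P Q <= c%:E)%E.
Proof.
move=> h; apply: ub_ereal_sup => _ [i hi <-]; rewrite kelt lee_fin; exact: h.
Qed.

Lemma kuiper_ge (R : realType) (P Q : probability R R) (i : interval R) :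
  nondeg_itv i -> ((`|pr P [set` i] - pr Q [set` i]|)%:E <= kuiper P Q)%E.
Proof. by move=> hi; apply: ereal_sup_ubound; exists i => //; rewrite kelt. Qed.

Lemma abs01 (R : realType) (a b : R) : 0 <= a <= 1 -> 0 <= b <= 1 -> `|a - b| <= 1.
Proof.
move=> /andP[a0 a1] /andP[b0 b1]; rewrite ler_norml; apply/andP; split; lra.
Qed.

Lemma kuiper_le1 (R : realType) (P Q : probability R R) : (kuiper P Q <= 1)%E.
Proof.
apply: kuiper_le => i _; apply: abs01; rewrite pr_ge0 pr_le1 //; exact: measurable_itv.
Qed.

Lemma kuiper_gt (R : realType) (P Q : probability R R) : kuiper P Q = 1%E ->
  forall e : R, 0 < e -> exists i, nondeg_itv i /\ 1 - e < `|pr P [set` i] - pr Q [set` i]|.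
Proof.
move=> k1 e e0.
have : ((1 - e)%:E < kuiper P Q)%E by rewrite k1 lte_fin; lra.
move=> /ereal_sup_gt [_ [i hi <-]]; rewrite kelt lte_fin => h.
by exists i.
Qed.

Lemma kuiperC (R : realType) (P Q : probability R R) : kuiper P Q = kuiper Q P.
Proof.
rewrite /kuiper; congr ereal_sup; apply: eq_imagel => i _.
by rewrite !kelt distrC.
Qed.

Lemma pt1_dirac (R : realType) (P : probability R R) (x : R) :
  pr P [set x] = 1 -> forall A, measurable A -> P A = \d_x A.
Proof.
move=> h1 A mA; rewrite diracE (prE P mA).
have mx : measurable [set x] by exact: measurable_set1.
case: (boolP (x \in A)) => xA /=.
- congr EFin; apply/le_anti; rewrite pr_le1 //=.
  rewrite -h1; apply: pr_le => // y /= ->; exact/set_mem.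
- congr EFin; apply/le_anti; rewrite pr_ge0 andbT.
  have : pr P A <= pr P (~` [set x]).
    apply: pr_le => //; first exact: measurableC.
    by move=> y Ay /= yx; move: xA; rewrite -yx; move/negP; apply; exact/mem_set.
  by rewrite pr_setC // h1 subrr.
Qed.

Lemma null2 (R : realType) (P : probability R R) A B : measurable A -> measurable B ->
  pr P A = 0 -> pr P B = 0 -> pr P (A `|` B) = 0.
Proof.
move=> mA mB hA hB; apply/le_anti; rewrite pr_ge0 andbT.
by have := pr_U2 P mA mB; rewrite hA hB addr0.
Qed.

Lemma itv_mono (R : realType) (P : probability R R) (s t : R) : s <= t ->
  pr P `]-oo, s] <= pr P `]-oo, t].
Proof.
move=> st; apply: pr_le; try exact: measurable_itv.
by move=> y /=; rewrite !in_itv /= => ys; exact: le_trans ys st.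
Qed.

Lemma zero_one_dirac (R : realType) (P : probability R R) :
  (forall A, measurable A -> pr P A = 0 \/ pr P A = 1) -> is_dirac P.
Proof.
move=> h01.
pose F t := pr P `]-oo, t].
have mI : forall t : R, measurable `]-oo, t] by move=> t; exact: measurable_itv.
have F01 : forall t, F t = 0 \/ F t = 1 by move=> t; exact: h01.
have ex1 : exists n : nat, F (- n%:R) = 0.
  apply/not_existsP => hn.
  have hc : forall n : nat, pr P (~` `]-oo, - n%:R]) = 0.
    move=> n; rewrite pr_setC //.
    by case: (F01 (- n%:R)) => e; [exfalso; exact: (hn n)|rewrite /F in e; rewrite e subrr].
  have : pr P (\bigcup_n ~` `]-oo, - n%:R]) = 0.
    by apply: pr_bigcup0 => // n; exact: measurableC.
  rewrite (_ : \bigcup_n _ = setT) ?pr_setT; first by move=> /eqP; rewrite oner_eq0.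
  apply/seteqP; split => // y _.
  exists (Num.truncn (- y)).+1 => //=; rewrite in_itv /=.
  apply/negP; rewrite -ltNge ltrNl; exact: truncnS_gt.
have ex2 : exists n : nat, F n%:R = 1.
  apply/not_existsP => hn.
  have hc : forall n : nat, pr P `]-oo, n%:R] = 0.
    by move=> n; case: (F01 n%:R) => // e; exfalso; exact: (hn n).
  have : pr P (\bigcup_n [set` `]-oo, n%:R]]) = 0 by exact: pr_bigcup0.
  rewrite (_ : \bigcup_n _ = setT) ?pr_setT; first by move=> /eqP; rewrite oner_eq0.
  apply/seteqP; split => // y _.
  exists (Num.truncn y).+1 => //=; rewrite in_itv /=; apply/ltW; exact: truncnS_gt.
pose L := [set t | F t = 0].
have [n1 hn1] := ex1.
have [n2 hn2] := ex2.
have Lub : forall t, L t -> t <= n2%:R.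
  move=> t Lt; rewrite leNgt; apply/negP => lt.
  have := itv_mono P (ltW lt); rewrite -/(F _) -/(F _) hn2 Lt; lra.
have hsL : has_sup L by split; [exists (- n1%:R) | exists n2%:R => t; exact: Lub].
pose x := sup L.
have Hlo : forall k : nat, pr P `]-oo, x - k.+1%:R^-1] = 0.
  move=> k; have [t Lt lt] : exists2 t, L t & x - k.+1%:R^-1 < t.
    by apply: sup_adherent => //; rewrite invr_gt0 ltr0Sn.
  apply/le_anti; rewrite pr_ge0 andbT -[X in _ <= X]Lt.
  exact/itv_mono/ltW.
have Hhi : forall k : nat, pr P (~` `]-oo, x + k.+1%:R^-1]) = 0.
  move=> k; rewrite pr_setC //.
  case: (F01 (x + k.+1%:R^-1)) => e; last by rewrite /F in e; rewrite e subrr.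
  have h1 : x + k.+1%:R^-1 <= x by apply: sup_upper_bound.
  have h2 : 0 < k.+1%:R^-1 :> R by rewrite invr_gt0 ltr0Sn.
  by move: h1; rewrite gerDl leNgt h2.
clearbody x.
exists x; apply: pt1_dirac.
have mx : measurable [set x] by exact: measurable_set1.
have : pr P (~` [set x]) = 0.
  apply/le_anti; rewrite pr_ge0 andbT.
  have mU : forall k : nat, measurable (`]-oo, x - k.+1%:R^-1] `|` ~` `]-oo, x + k.+1%:R^-1]).
    by move=> k; apply: measurableU => //; exact: measurableC.
  rewrite -(@pr_bigcup0 R P _ mU); last first.
    by move=> k; apply: null2 => //; exact: measurableC.
  apply: pr_le => //; first exact: measurableC.
    exact: bigcupT_measurable.
  move=> y /= yx.
  have [yl|yg|//] := ltgtP y x.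
  - have [k hk] := ltr_add_invr yl; exists k => //; left => /=.
    rewrite in_itv /=; move: (k.+1%:R^-1) hk => e hk; lra.
  - have [k hk] := ltr_add_invr yg; exists k => //; right => /=.
    rewrite in_itv /=; apply/negP; rewrite -ltNge; move: (k.+1%:R^-1) hk => e hk; lra.
by rewrite pr_setC // => /eqP; rewrite subr_eq0 eq_sym => /eqP.
Qed.
Lemma keyA (R : realType) (p m m' n r t : R) : 0 < p -> r * p = m' -> m' <= m ->
  p + m - 1 <= m' -> 0 < t -> 1 - t * p < `|m - n| -> 0 <= m <= 1 -> 0 <= n <= 1 ->
  1 - (t + t * p) < `|n - r|.
Proof.
move=> p0 rp m'm m'ge t0 + /andP[m0 m1] /andP[n0 n1].
have [mn|mn] := lerP 0 (m - n).
- rewrite ger0_norm // => h.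
  have hr : 0 < (r - (1 - t)) * p by nra.
  have hr' : 0 < r - (1 - t) by rewrite -(pmulr_lgt0 _ p0).
  rewrite ltr_normr; apply/orP; right; lra.
- rewrite ltr0_norm // => h.
  have hr : 0 < (t - r) * p by nra.
  have hr' : 0 < t - r by rewrite -(pmulr_lgt0 _ p0).
  rewrite ltr_normr; apply/orP; left; lra.
Qed.
Lemma keyB (R : realType) (q c b : R) : 0 < q <= 1 -> 0 <= c <= 1 -> 0 <= b <= 1 - q ->
  `|c - (c * q + b)| <= 1 - q.
Proof.
move=> /andP[q0 q1] /andP[c0 c1] /andP[b0 b1].
rewrite ler_norml; apply/andP; split; nra.
Qed.

Lemma mem_self (R : realType) (mu : probability R R) :
  kuiper_one (kuiper_one [set mu]) mu.
Proof. by move=> nu Hnu; rewrite kuiperC; exact: Hnu. Qed.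

Lemma pr_cond_le1 (R : realType) (P : probability R R) A (mA : measurable A) U :
  measurable U -> pr (cond P mA) U <= 1.
Proof. exact: pr_le1. Qed.

Lemma dir1 (R : realType) (mu : probability R R) :
  card_one (kuiper_one (kuiper_one [set mu])) -> is_dirac mu.
Proof.
move=> [nu0 Snu0 Hall]; apply: zero_one_dirac => A mA.
have [h|hA0] := eqVneq (pr mu A) 0; first by left.
have [h|hA1] := eqVneq (pr mu A) 1; first by right.
exfalso.
pose p := pr mu A.
have p0 : 0 < p by rewrite lt_neqAle eq_sym hA0 pr_ge0.
have p1 : p < 1 by rewrite lt_neqAle hA1 pr_le1.
pose rho := cond mu mA.
have Srho : kuiper_one (kuiper_one [set mu]) rho.
  move=> nu Hnu; have k1 : kuiper mu nu = 1%E by exact: Hnu.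
  apply/le_anti; rewrite kuiper_le1 /=.
  apply/lee_subgt0Pr => e e0.
  pose t := e / (1 + p).
  have t0 : 0 < t by apply: divr_gt0 => //; lra.
  have et : t + t * p = e by rewrite /t -{1}(mulr1 (e / _)) -mulrDr mulfVK //; lra.
  have [i [ni hi]] := kuiper_gt k1 (mulr_gt0 t0 p0).
  apply: le_trans (kuiper_ge _ _ ni); rewrite -EFinB lee_fin.
  have mi := measurable_itv i.
  have miA : measurable ([set` i] `&` A) by exact: measurableI.
  apply/ltW; rewrite -et; apply: (@keyA R p (pr mu [set` i]) (pr mu ([set` i] `&` A))) => //.
  - by rewrite /rho condE // mulfVK //; apply/lt0r_neq0.
  - exact: pr_le.
  - have : pr mu A <= pr mu ([set` i] `&` A) + pr mu (~` [set` i]).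
      apply: le_trans (pr_U2 _ miA (measurableC mi)).
      apply: pr_le => //; first by apply: measurableU => //; exact: measurableC.
      by move=> y Ay; have [iy|iy] := pselect ([set` i] y); [left|right].
    rewrite pr_setC // -/p; lra.
  - by rewrite pr_ge0 pr_le1.
  - by rewrite pr_ge0 pr_le1.
have h1 := Hall _ Srho _ (measurableC mA).
have h2 := Hall _ (@mem_self R mu) _ (measurableC mA).
have : pr rho (~` A) = pr mu (~` A) by rewrite /pr h1 h2.
rewrite /rho condE //; last exact: measurableC.
rewrite setICl (_ : pr mu set0 = 0); last by rewrite /pr measure0.
rewrite mul0r pr_setC // -/p; lra.
Qed.

Lemma dir2 (R : realType) (mu : probability R R) :
  is_dirac mu -> card_one (kuiper_one (kuiper_one [set mu])).
Proof.
move=> [x hx]; exists mu; first exact: mem_self.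
move=> rho Srho.
have mx : measurable [set x] by exact: measurable_set1.
suff h1 : pr rho [set x] = 1.
  by move=> A mA; rewrite (pt1_dirac h1 mA) hx.
have [//|hne] := eqVneq (pr rho [set x]) 1.
exfalso.
have px1 : pr rho [set x] < 1 by rewrite lt_neqAle hne pr_le1.
pose J k : set R := [set` `]x - k.+1%:R^-1, x + k.+1%:R^-1[].
have mJ : forall k, measurable (J k) by move=> k; exact: measurable_itv.
have [k hk] : exists k, pr rho (~` J k) != 0.
  apply/not_existsP => hall.
  have : pr rho (\bigcup_k ~` J k) = 0.
    apply: pr_bigcup0 => [k|k]; first exact: measurableC.
    by move: (hall k); case: eqP.
  have : pr rho (~` [set x]) <= pr rho (\bigcup_k ~` J k).
    apply: pr_le; first exact: measurableC.
      by apply: bigcupT_measurable => k; exact: measurableC.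
    move=> y /= yx.
    have yx0 : 0 < `|y - x| by rewrite normr_gt0 subr_eq0; apply/eqP.
    have [k hk] := ltr_add_invr yx0.
    exists k => //; rewrite /J /= in_itv /= => /andP[a b].
    move: (k.+1%:R^-1) hk a b; move=> e; rewrite add0r.
    have [yx1|yx1] := lerP 0 (y - x).
      by rewrite ger0_norm //; lra.
    by rewrite ltr0_norm //; lra.
  rewrite pr_setC //; lra.
have mJc := measurableC (mJ k).
pose q := pr rho (~` J k).
have q0 : 0 < q by rewrite lt_neqAle eq_sym hk pr_ge0.
have q1 : q <= 1 by exact: pr_le1.
pose nu := cond rho mJc.
have d0 : 0 < k.+1%:R^-1 :> R by rewrite invr_gt0 ltr0Sn.
pose d := k.+1%:R^-1 : R.
have Jk : forall y, J k y <-> x - d < y < x + d.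
  by move=> y; rewrite /J /= in_itv.
have dp : 0 < d by [].
clearbody J d.
have hd2 : 0 < d / 2 by apply: divr_gt0 => //; lra.
pose I0 := `[x, x + d / 2].
have ni : nondeg_itv I0.
  exists x, (x + d / 2); rewrite !in_itv /=; move: (d / 2) hd2 => e e0.
  split; first lra.
  by split; apply/andP; split; lra.
have k1 : kuiper mu nu = 1%E.
  apply/le_anti; rewrite kuiper_le1 /=.
  apply: le_trans (kuiper_ge _ _ ni); rewrite lee_fin.
  have -> : pr mu [set` I0] = 1.
    apply: EFin_inj; rewrite -prE; last exact: measurable_itv.
    rewrite hx; last exact: measurable_itv.
    rewrite diracE; suff -> : x \in [set` I0] by [].
    apply/mem_set; rewrite /= in_itv /= lexx lerDl; exact: ltW.
  have -> : pr nu [set` I0] = 0.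
    rewrite /nu (condE mJc q0 (measurable_itv I0)).
    rewrite (_ : _ `&` _ = set0); first by rewrite /pr measure0 mul0r.
    apply/seteqP; split => // y [/= + /Jk].
    rewrite in_itv /= => /andP[a b]; apply.
    have hlt : d / 2 < d by rewrite ltr_pdivrMr //; lra.
    move: (d / 2) hd2 hlt b => e e0 hlt b; apply/andP; split; lra.
  by rewrite subr0 normr1.
have k2 : kuiper nu rho = 1%E by apply: Srho => m ->.
have : (kuiper nu rho <= (1 - q)%:E)%E.
  apply: kuiper_le => i _.
  have mi := measurable_itv i.
  have m1 : measurable ([set` i] `&` ~` J k) by exact: measurableI.
  have m2 : measurable ([set` i] `&` J k) by exact: measurableI.
  have e : pr rho [set` i] = pr rho ([set` i] `&` ~` J k) + pr rho ([set` i] `&` J k).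
    rewrite -pr_disjU //; last first.
      by rewrite setIACA setICl setI0.
    by rewrite -setIUr setUCl setIT.
  rewrite e /nu (condE mJc q0 mi) -/q.
  set a := pr rho (_ `&` ~` J k).
  have aq : a <= q by apply: pr_le => //; exact: subIsetr.
  rewrite -[X in _ - (X + _)](mulfVK (lt0r_neq0 q0)).
  apply: keyB.
  - by rewrite q0 q1.
  - by rewrite divr_ge0 ?pr_ge0 ?(ltW q0) //= ler_pdivrMr // mul1r.
  - rewrite pr_ge0 /=.
    have : pr rho ([set` i] `&` J k) <= pr rho (J k) by apply: pr_le => //; exact: subIsetr.
    rewrite /q pr_setC // => h; lra.
rewrite k2 lee_fin => h; lra.
Qed.

Theorem lemma3p1 (R : realType) (mu : probability R R) :
  card_one (kuiper_one (kuiper_one [set mu])) <-> is_dirac mu.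
Proof. by split; [exact: dir1 | exact: dir2]. Qed.
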